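(* There is an absolute constant $C > 0$ such that for every $L \geq 1$, $m \geq 1$, $k^* \in [m]$ and every ordered pair $(\tau, \tilde\tau)$ of states in $[m]^{L+1}$, the number of triples $(\lambda, i, k) \in [m]^{L+1}\times\{0,\ldots,L\}\times[m]$ such that $(\tau,\tilde\tau)$ occurs as a pair of consecutive states of the path $\gamma_{\lambda,\lambda_{[i,k]}}$ is at most $C m^2 (L+1)^{1 + \log_2 3}$.
   Context: States are $\lambda = (\lambda_0,\ldots,\lambda_L) \in [m]^{L+1}$; coordinate $\ell$ is level $\ell$. $\lambda_{[i,k]}$ is $\lambda$ with the level-$i$ entry replaced by $k$. The procedure $\mathbf{Swap}(a,b)$ ($0\le a\le b\le L$): if $b - a \leq 1$, perform the single elementary operation exchanging the entries at levels $a$ and $b$; otherwise with $h = \lfloor (a+b)/2 \rfloor$ perform $\mathbf{Swap}(a,h)$, then $\mathbf{Swap}(h,b)$, then $\mathbf{Swap}(a,h)$. The path $\gamma_{\lambda,\lambda_{[i,k]}}$ (with $k^*$ a fixed element of $[m]$) starts at $\lambda$ and performs in order: (1) set the level-0 entry to $k^*$; (2) $\mathbf{Swap}(0,i)$; (3) set the level-0 entry to $k$; (4) $\mathbf{Swap}(0,i)$; (5) set the level-0 entry to $\lambda_0$. The path is the sequence of states consisting of $\lambda$ followed by the state after each elementary operation; a pair of consecutive states is (state before, state after) one elementary operation. *)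

(* Defs.v *)
From mathcomp Require Import all_boot.
From Stdlib Require Import Reals.
Set Implicit Arguments. Unset Strict Implicit. Unset Printing Implicit Defensive.

(* States lambda = (lambda_0,...,lambda_L) in [m]^{L+1}; [m] is encoded as 'I_m
   (values 0..m-1 instead of 1..m), levels as 'I_L.+1. *)
Definition state (L m : nat) := {ffun 'I_L.+1 -> 'I_m}.

Inductive elop (m : nat) :=
| SetZero of 'I_m
| Exch of nat & nat.

Definition exch_state L m (a b : nat) (s : state L m) : state L m :=
  [ffun j : 'I_L.+1 => if j == inord a then s (inord b)
                       else if j == inord b then s (inord a) else s j].

Definition set0_state L m (k : 'I_m) (s : state L m) : state L m :=
  [ffun j : 'I_L.+1 => if j == ord0 then k else s j].

Definition apply_op L m (s : state L m) (o : elop m) : state L m :=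
  match o with
  | SetZero k => set0_state k s
  | Exch a b => exch_state a b s
  end.

(* Swap(a,b) as the list of pairs of levels exchanged by its elementary
   operations, in order.  [fuel] only ensures structural recursion; with
   fuel >= b - a + 1 it never runs out. *)
Fixpoint swap_pairs (fuel a b : nat) : seq (nat * nat) :=
  match fuel with
  | 0 => [::]
  | fuel'.+1 =>
      if b - a <= 1 then [:: (a, b)]
      else let h := (a + b)./2 in
           swap_pairs fuel' a h ++ swap_pairs fuel' h b ++ swap_pairs fuel' a h
  end.

Definition Swap_ops m (a b : nat) : seq (elop m) :=
  [seq Exch m p.1 p.2 | p <- swap_pairs (b - a).+1 a b].

Definition gamma_ops L m (kstar : 'I_m) (lam : state L m) (i : 'I_L.+1) (k : 'I_m)
  : seq (elop m) :=
  [:: SetZero kstar] ++ Swap_ops m 0 i ++ [:: SetZero k] ++ Swap_ops m 0 i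
  ++ [:: SetZero (lam ord0)].

Definition gamma_path L m (kstar : 'I_m) (lam : state L m) (i : 'I_L.+1) (k : 'I_m)
  : seq (state L m) :=
  lam :: scanl (@apply_op L m) lam (gamma_ops kstar lam i k).

Definition occurs_consecutiveb (T : eqType) (tau tau' : T) (p : seq T) : bool :=
  (tau, tau') \in zip p (behead p).

Definition triples_through L m (kstar : 'I_m) (tau tau' : state L m)
  : {set (state L m * 'I_L.+1 * 'I_m)} :=
  [set t | occurs_consecutiveb tau tau' (gamma_path kstar t.1.1 t.1.2 t.2)].

(* Main.v *)
Require Import Defs.
From mathcomp Require Import all_boot zify.
Set Implicit Arguments. Unset Strict Implicit.

Lemma exchK L m a b : involutive (@exch_state L m a b).
Proof.
move=> s; apply/ffunP=> j; rewrite !ffunE.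
set A := (inord a : 'I_L.+1); set B := (inord b : 'I_L.+1).
case: (eqVneq j A) => [->|ja]; case: (eqVneq A B) => [<-|ab]; rewrite ?eqxx //=.
  by rewrite (negPf ja).
by case: (eqVneq j B) => [->|jb] //.
Qed.

Lemma foldl_exch_inj L m (ps : seq (nat*nat)) :
  injective (fun s : state L m => foldl (@apply_op L m) s [seq Exch m p.1 p.2 | p <- ps]).
Proof.
elim: ps => [|p ps IH] x y //= /IH /=.
exact: (can_inj (@exchK L m p.1 p.2)).
Qed.

Lemma SE_inj L m (i : nat) r :
  injective (fun s : state L m => foldl (@apply_op L m) s (take r (Swap_ops m 0 i))).
Proof. by rewrite /Swap_ops -map_take; apply: foldl_exch_inj. Qed.

Lemma set0_inj L m (c c' : 'I_m) (x y : state L m) :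
  set0_state c x = set0_state c' y -> x ord0 = y ord0 -> x = y.
Proof.
move=> /ffunP H H0; apply/ffunP=> j; have := H j; rewrite !ffunE.
by case: (eqVneq j ord0) => [->|].
Qed.

Lemma set0_val L m (c : 'I_m) (x : state L m) : set0_state c x ord0 = c.
Proof. by rewrite ffunE eqxx. Qed.

Lemma core L m (kstar : 'I_m) (i : 'I_L.+1) (l l' : state L m) (k k' : 'I_m) t :
 t < (size (Swap_ops m 0 i)).*2 + 3 ->
 foldl (@apply_op L m) l (take t (gamma_ops kstar l i k)) =
 foldl (@apply_op L m) l' (take t (gamma_ops kstar l' i k')) ->
 l ord0 = l' ord0 ->
 (if t <= (size (Swap_ops m 0 i)).+1 then k = k'
  else (foldl (@apply_op L m) (set0_state kstar l) (Swap_ops m 0 i)) ord0 =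
       (foldl (@apply_op L m) (set0_state kstar l') (Swap_ops m 0 i)) ord0) ->
 l = l' /\ k = k'.
Proof.
set E := Swap_ops m 0 i => Ht.
rewrite /gamma_ops -/E /=.
case: t Ht => [|t] Ht /=; first by move=> -> _ ->.
rewrite !take_cat.
case: ifP => Hte.
  move=> /SE_inj /set0_inj H0 /H0 ->.
  by have -> : t.+1 <= (size E).+1 by lia.
rewrite !foldl_cat.
case Hd: (t - size E) => [|d] /=.
  rewrite -{1}(take_size E) -[in X in _ = X](take_size E).
  move=> /SE_inj /set0_inj H0 /H0 ->.
  by have -> : t.+1 <= (size E).+1 by lia.
have Hd2 : d <= size E by lia.
have TE : forall c : elop m, take d (E ++ [:: c]) = take d E.
  move=> c; rewrite take_cat; case: ltnP => // h.
  have -> : d - size E = 0 by lia.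
  have -> : d = size E by lia.
  by rewrite take0 cats0 take_size.
rewrite !TE => /SE_inj H.
have kk : k = k' by move: (f_equal (fun s : state L m => s ord0) H); rewrite !set0_val.
move: H => /set0_inj H0 l0.
have -> : t.+1 <= (size E).+1 = false by lia.
move=> /H0; rewrite -{1}(take_size E) -[in X in _ = X](take_size E).
by move=> /SE_inj /set0_inj H1; rewrite (H1 l0).
Qed.
Lemma size_swap fuel a b K : b - a <= 2^K -> size (swap_pairs fuel a b) <= 3^K.
Proof.
elim: fuel a b K => [|f IH] a b K H //=.
case: ifP => Hb; first by rewrite expn_gt0.
case: K H => [|K] H; first by rewrite expn0 in H; lia.
rewrite !size_cat.
have h1 := IH a ((a + b)./2) K.
have h2 := IH ((a + b)./2) b K.
move: H h1 h2; rewrite -divn2 !expnS => H h1 h2.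
have e1 : (a + b) %/ 2 - a <= 2 ^ K by lia.
have e2 : b - (a + b) %/ 2 <= 2 ^ K by lia.
move: (h1 e1) (h2 e2); lia.
Qed.

Lemma size_Swap m (i : nat) K : i <= 2^K -> size (Swap_ops m 0 i) <= 3^K.
Proof. by rewrite /Swap_ops size_map => H; apply: size_swap; rewrite subn0. Qed.

Lemma nth_gamma L m kstar (l : state L m) i k t x0 :
  t <= size (gamma_ops kstar l i k) ->
  nth x0 (gamma_path kstar l i k) t = foldl (@apply_op L m) l (take t (gamma_ops kstar l i k)).
Proof.
rewrite /gamma_path; case: t => [|t] H; first by [].
have -> : nth x0 (l :: scanl (@apply_op L m) l (gamma_ops kstar l i k)) t.+1
  = nth x0 (scanl (@apply_op L m) l (gamma_ops kstar l i k)) t by [].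
by rewrite nth_scanl.
Qed.

Lemma size_gamma L m kstar (l : state L m) i k :
  size (gamma_ops kstar l i k) = (size (Swap_ops m 0 i)).*2 + 3.
Proof. rewrite /gamma_ops /= !size_cat /=.
by rewrite size_cat /= -addnn; lia. Qed.

Lemma mem_fact L m kstar (tau tau' : state L m) l i k :
  let p := gamma_path kstar l i k in
  (tau, tau') \in zip p (behead p) ->
  index (tau, tau') (zip p (behead p)) < size (gamma_ops kstar l i k) /\
  nth tau p (index (tau, tau') (zip p (behead p))) = tau.
Proof.
move=> p H.
have sz : size (zip p (behead p)) = size (gamma_ops kstar l i k).
  by rewrite size_zip size_behead /p /gamma_path /= size_scanl; lia.
have Hi := index_mem (tau, tau') (zip p (behead p)); rewrite H in Hi.
split; first by rewrite -sz.
have := nth_index (tau, tau) H.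
by rewrite nth_zip_cond Hi => -[].
Qed.

Lemma count_bound L m kstar (tau tau' : state L m) T : L <= 2^T ->
  #|triples_through kstar tau tau'| <= L.+1 * ((3^T).*2 + 3) * (m * m).
Proof.
move=> LT.
set n := (3^T).*2 + 2.
pose tx (x : state L m * 'I_L.+1 * 'I_m) :=
  index (tau,tau') (zip (gamma_path kstar x.1.1 x.1.2 x.2) (behead (gamma_path kstar x.1.1 x.1.2 x.2))).
pose G (x : state L m * 'I_L.+1 * 'I_m) :=
  foldl (@apply_op L m) (set0_state kstar x.1.1) (Swap_ops m 0 x.1.2).
pose f (x : state L m * 'I_L.+1 * 'I_m) : 'I_L.+1 * 'I_n.+1 * ('I_m * 'I_m) :=
  (x.1.2, inord (tx x), (x.1.1 ord0,
     if tx x <= (size (Swap_ops m 0 x.1.2)).+1 then x.2 else G x ord0)).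
have inj : {in triples_through kstar tau tau' &, injective f}.
  move=> [[l i] k] [[l' i'] k']; rewrite !inE /occurs_consecutiveb => Hx Hy.
  move=> [ei et e0 ekey]; subst i'.
  have [Hx1 Hx2] := mem_fact Hx.
  have [Hy1 Hy2] := mem_fact Hy.
  have es : size (Swap_ops m 0 i) <= 3^T.
    by apply: size_Swap; apply: leq_trans LT; rewrite -ltnS.
  change (is_true (tx (l,i,k) < size (gamma_ops kstar l i k))) in Hx1.
  change (is_true (tx (l',i,k') < size (gamma_ops kstar l' i k'))) in Hy1.
  rewrite size_gamma in Hx1; rewrite size_gamma in Hy1.
  have ett : tx (l, i, k) = tx (l', i, k').
    move: et => /(congr1 val); rewrite /= !inordK //; rewrite /n; move: Hx1 Hy1 es; rewrite -!addnn;
move: (3 ^ T) (size (Swap_ops m 0 i)) (tx (l,i,k)) (tx (l',i,k')) => *; lia.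
  change (nth tau (gamma_path kstar l i k) (tx (l,i,k)) = tau) in Hx2.
  change (nth tau (gamma_path kstar l' i k') (tx (l',i,k')) = tau) in Hy2.
  move: Hy2; rewrite -ett nth_gamma; last by rewrite size_gamma ltnW.
  move: Hx2; rewrite nth_gamma; last by rewrite size_gamma ltnW.
  move=> <- Heq.
  move: ekey; rewrite -ett => ekey.
  have := core Hx1 (esym Heq) e0.
  by case: ifP ekey => _ ekey /(_ ekey) [-> ->].
rewrite -(card_in_imset inj).
apply: leq_trans (max_card _) _.
rewrite !card_prod !card_ord /n.
by have -> : ((3^T).*2 + 2).+1 = (3^T).*2 + 3 by rewrite -addn1 -addnA.
Qed.

Lemma expn_pow a b : expn a b = Nat.pow a b.
Proof. elim: b => [|b IH]; first by rewrite expn0. by rewrite expnS IH -multE. Qed.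

From Stdlib Require Import Reals Lra.
Lemma real_part (L T m : nat) : (2^T <= L)%N ->
  (INR (L.+1 * ((3^T.+1).*2 + 3) * (m * m))
   <= 9 * INR (m ^ 2) * Rpower (INR L.+1) (1 + ln 3 / ln 2))%R.
Proof.
move=> HT.
set c := (ln 3 / ln 2)%R.
have l2 : (0 < ln 2)%R by rewrite -ln_1; apply: ln_increasing; lra.
have l3 : (0 < ln 3)%R by rewrite -ln_1; apply: ln_increasing; lra.
have c0 : (0 <= c)%R by rewrite /c; apply: Rlt_le; apply: Rdiv_lt_0_compat.
have HL : (0 < INR L.+1)%R by apply: lt_0_INR; apply/ltP.
set X := Rpower (INR L.+1) c.
have X1 : (1 <= X)%R.
  have -> : 1%R = Rpower 1 c by rewrite /Rpower ln_1 Rmult_0_r exp_0.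
  apply: Rle_Rpower_l => //; split; first lra.
  by rewrite S_INR; have := pos_INR L; lra.
have P23 : Rpower 2 c = 3%R.
  rewrite /Rpower /c.
  have -> : (ln 3 / ln 2 * ln 2 = ln 3)%R by field; lra.
  by rewrite exp_ln; lra.
have H3 : (INR (3 ^ T) <= X)%R.
  have -> : INR (3 ^ T) = Rpower (INR (2 ^ T)) c.
    rewrite !pow_INR.
    replace (INR 3) with 3%R by (simpl; lra).
    replace (INR 2) with 2%R by (simpl; lra).
    rewrite -!Rpower_pow; try lra.
    by rewrite -{1}P23 !Rpower_mult Rmult_comm.
  apply: Rle_Rpower_l => //; split.
    by rewrite pow_INR; apply: pow_lt; simpl; lra.
  by apply: le_INR; apply/leP; lia.
have -> : Rpower (INR L.+1) (1 + c) = (INR L.+1 * X)%R.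
  by rewrite Rpower_plus Rpower_1.
have Hn : (L.+1 * ((3^T.+1).*2 + 3) * (m * m) <= 9 * (m ^ 2) * (L.+1 * 3 ^ T))%N.
  rewrite Nat.pow_succ_r' -addnn.
  have : 3 ^ T <> 0 by apply: Nat.pow_nonzero.
  rewrite Nat.pow_2_r ?multE; move: (3 ^ T) (m * m) => P M; nia.
apply: Rle_trans (le_INR _ _ (elimT leP Hn)) _.
rewrite -!multE !mult_INR.
replace (INR 9) with 9%R by (simpl; lra).
have := pos_INR m => Hm.
apply: Rmult_le_compat_l; first by rewrite -!mult_INR; apply: Rmult_le_pos; [lra| apply: pos_INR].
apply: Rmult_le_compat_l; first lra.
exact: H3.
Qed.

Theorem lemma6 :
  exists C : R, (0 < C)%R /\
  forall (L m : nat) (kstar : 'I_m) (tau tau' : state L m),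
    (1 <= L)%N -> (1 <= m)%N ->
    (INR #|triples_through kstar tau tau'|
       <= C * INR (m ^ 2) * Rpower (INR L.+1) (1 + ln 3 / ln 2))%R.
Proof.
exists 9%R; split; first lra.
move=> L m kstar tau tau' L1 m1.
have HT := @trunc_logP 2 L isT L1.
have HL := ltnW (@trunc_log_ltn 2 L isT).
apply: Rle_trans (le_INR _ _ (elimT leP (count_bound kstar tau tau' HL))) _.
move: HT; rewrite !expn_pow => HT.
exact: real_part.
Qed.
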